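(* Assume the system $\dot x(t)=f(x_t,u(t))$ as in the context is robustly forward complete. Let $S\subseteq\mathcal X^n$ be compact, $\mathcal U\subseteq\mathbb R^m$ bounded and $T>0$. Then the closure in $\mathcal X^n$ of $\mathcal R^T_{\mathcal U}(S)=\{x_t^{\xi,u}:\ 0\le t\le T,\ u\in\mathcal M_{\mathcal U},\ \xi\in S\}$ is compact.
   Context: Fix $\theta>0$; $\mathcal X^n=C([-\theta,0],\mathbb R^n)$ with norm $\|\xi\|_{\mathcal X}=\max_{s\in[-\theta,0]}|\xi(s)|$; $x_t(s)=x(t+s)$. $\mathcal M$: measurable locally essentially bounded $u:\mathbb R_{\ge0}\to\mathbb R^m$, $\|u\|$ the essential supremum on $[0,\infty)$; $\mathcal M_{\mathcal U}$: those with values in $\mathcal U$. $f:\mathcal X^n\times\mathbb R^m\to\mathbb R^n$ is locally Lipschitz and maps bounded sets to bounded sets; $x(\cdot,\xi,u)$ is the unique maximal solution with $x(s)=\xi(s)$ on $[-\theta,0]$ and input $u$, and $x_t^{\xi,u}(s)=x(t+s,\xi,u)$. Robustly forward complete: every maximal solution is defined for all $t\ge0$ and for every $T,R>0$, $\sup\{\|x_t^{\xi,u}\|_{\mathcal X}:\|\xi\|_{\mathcal X}\le R,\|u\|\le R,t\in[0,T]\}<\infty$. *)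

(* Defs.v *)
From HB Require Import structures.
From mathcomp Require Import all_boot all_order all_algebra.
From mathcomp Require Import all_classical all_reals all_analysis.
Set Implicit Arguments. Unset Strict Implicit. Unset Printing Implicit Defensive.
Import Order.TTheory GRing.Theory Num.Theory.
Import numFieldNormedType.Exports.
Local Open Scope classical_set_scope.
Local Open Scope ring_scope.

Definition delay_int {R : realType} (θ : R) : set R := `[- θ, 0]%classic.

(** The state space X^n = C([-θ,0], R^n), modelled by functions R -> R^n
    (only the values on [-θ,0] matter) carrying the topology of uniform
    convergence on [-θ,0], i.e. the topology of the sup norm. *)
Definition Xspace {R : realType} (θ : R) (n : nat) : Type :=
  {uniform` delay_int θ -> 'rV[R]_n}.

Definition in_X {R : realType} {n : nat} (θ : R) (ξ : R -> 'rV[R]_n) : Prop :=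
  {within delay_int θ, continuous ξ}.

Definition Xnorm {R : realType} {n : nat} (θ : R) (ξ : R -> 'rV[R]_n) : R :=
  sup [set `|ξ s| | s in delay_int θ].

Definition hist_at {R : realType} {n : nat} (x : R -> 'rV[R]_n) (t : R) : R -> 'rV[R]_n :=
  fun s => x (t + s).

Definition ess_bounded_by {R : realType} {m : nat} (u : R -> 'rV[R]_m) (r : R) : Prop :=
  {ae (@lebesgue_measure R), forall t, `[0%R : R, +oo[%classic t -> `|u t| <= r}.

Definition input_M {R : realType} {m : nat} (u : R -> 'rV[R]_m) : Prop :=
  (forall j : 'I_m, measurable_fun `[0%R : R, +oo[%classic (fun t => u t ord0 j)) /\
  (forall T : R, exists r : R,
     {ae (@lebesgue_measure R), forall t, `[0%R : R, T]%classic t -> `|u t| <= r}).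

Definition input_MU {R : realType} {m : nat} (U : set 'rV[R]_m) (u : R -> 'rV[R]_m) : Prop :=
  input_M u /\ (forall t, 0 <= t -> U (u t)).

Definition f_local {R : realType} {n m : nat} (θ : R)
  (f : (R -> 'rV[R]_n) -> 'rV[R]_m -> 'rV[R]_n) : Prop :=
  forall ξ η v, in_X θ ξ -> in_X θ η -> {in delay_int θ, ξ =1 η} -> f ξ v = f η v.

Definition f_locally_lipschitz {R : realType} {n m : nat} (θ : R)
  (f : (R -> 'rV[R]_n) -> 'rV[R]_m -> 'rV[R]_n) : Prop :=
  forall ξ0 v0, in_X θ ξ0 ->
  exists r : R, exists L : R, 0 < r /\
    forall ξ η v w, in_X θ ξ -> in_X θ η ->
      Xnorm θ (ξ \- ξ0) < r -> Xnorm θ (η \- ξ0) < r ->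
      `|v - v0| < r -> `|w - v0| < r ->
      `|f ξ v - f η w| <= L * (Xnorm θ (ξ \- η) + `|v - w|).

Definition f_bounded_on_bounded {R : realType} {n m : nat} (θ : R)
  (f : (R -> 'rV[R]_n) -> 'rV[R]_m -> 'rV[R]_n) : Prop :=
  forall r : R, exists K : R, forall ξ v, in_X θ ξ -> Xnorm θ ξ <= r -> `|v| <= r ->
    `|f ξ v| <= K.

(** x is a (Caratheodory) solution on [-θ, +oo) of  x'(t) = f(x_t, u(t)),
    x = ξ on [-θ,0], in integral form, componentwise. *)
Definition is_solution {R : realType} {n m : nat} (θ : R)
  (f : (R -> 'rV[R]_n) -> 'rV[R]_m -> 'rV[R]_n)
  (ξ : R -> 'rV[R]_n) (u : R -> 'rV[R]_m) (x : R -> 'rV[R]_n) : Prop :=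
  (forall s, delay_int θ s -> x s = ξ s) /\
  (forall t, 0 <= t -> forall i : 'I_n,
     (@lebesgue_measure R).-integrable `[0%R : R, t]%classic
        (fun s => ((f (hist_at x s) (u s)) ord0 i)%:E) /\
     x t ord0 i = ξ 0 ord0 i +
        Rintegral (@lebesgue_measure R) `[0%R : R, t]%classic
          (fun s => (f (hist_at x s) (u s)) ord0 i)).

Definition robustly_forward_complete {R : realType} {n m : nat} (θ : R)
  (f : (R -> 'rV[R]_n) -> 'rV[R]_m -> 'rV[R]_n) : Prop :=
  (forall ξ u, in_X θ ξ -> input_M u -> exists x, is_solution θ f ξ u x) /\
  (forall T r : R, 0 < T -> 0 < r -> exists K : R,
     forall ξ u x t, in_X θ ξ -> Xnorm θ ξ <= r -> input_M u -> ess_bounded_by u r ->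
       is_solution θ f ξ u x -> 0 <= t <= T -> Xnorm θ (hist_at x t) <= K).

Definition reach_set {R : realType} {n m : nat} (θ : R)
  (f : (R -> 'rV[R]_n) -> 'rV[R]_m -> 'rV[R]_n)
  (S : set (R -> 'rV[R]_n)) (U : set 'rV[R]_m) (T : R) : set (R -> 'rV[R]_n) :=
  [set y | exists t ξ u x, [/\ 0 <= t <= T, input_MU U u, S ξ,
             is_solution θ f ξ u x & y = hist_at x t]].

(* Main.v *)
Require Import Defs.
From HB Require Import structures.
From mathcomp Require Import all_boot all_order all_algebra.
From mathcomp Require Import all_classical all_reals all_analysis.
From mathcomp Require Import ring lra measurable_realfun.
Import Order.TTheory GRing.Theory Num.Theory.
Import numFieldNormedType.Exports.
Local Open Scope classical_set_scope.
Local Open Scope ring_scope.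
Section Topo.
Context {R : realType} {n : nat} (θ : R) (θ0 : 0 < θ).

Definition clamp (s : R) : R := if s <= - θ then - θ else if s <= 0 then s else 0.
Definition psi (g : R -> 'rV[R]_n) : R -> 'rV[R]_n := fun s => g (clamp s).

Lemma clampE s : (s <= -θ /\ clamp s = -θ) \/ (-θ <= s <= 0 /\ clamp s = s) \/ (0 <= s /\ clamp s = 0).
Proof.
rewrite /clamp; case: (leP s (-θ)) => h1; first by left.
case: (leP s 0) => h2; first by right; left; split => //; apply/andP; split => //; exact: ltW.
by right; right; split => //; exact: ltW.
Qed.

Lemma clampD s : delay_int θ (clamp s).
Proof.
rewrite /delay_int /= in_itv /=.
have := θ0; case: (clampE s) => [[_ ->]|[[/andP[h1 h2] ->]|[_ ->]]] => t0; apply/andP; split => //; lra.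
Qed.

Lemma clamp_id s : delay_int θ s -> clamp s = s.
Proof.
rewrite /delay_int /= in_itv /= => /andP[h1 h2].
case: (clampE s) => [[h3 ->]|[[_ ->]|[h3 ->]]] //; lra.
Qed.

Lemma clamp_lip a b : `|clamp a - clamp b| <= `|a - b|.
Proof.
have := θ0 => t0.
rewrite ler_norml.
case: (leP 0 (a - b)) => hab; [rewrite (ger0_norm hab)|rewrite (ltr0_norm hab)];
case: (clampE a) => [[ha ->]|[[/andP[ha1 ha2] ->]|[ha ->]]];
case: (clampE b) => [[hb ->]|[[/andP[hb1 hb2] ->]|[hb ->]]];
apply/andP; split; lra.
Qed.

Let D := delay_int θ.
Let fc := {family compact, R -> 'rV[R]_n}.

Lemma psi_cont (g : Xspace θ n) :
  {family compact, psi @ (nbhs g) --> (psi g : fc)}.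
Proof.
apply/fam_cvgP => K _.
move=> P /uniform_nbhs [E [entE EP]].
apply/uniform_nbhs; exists E; split => // k Ek.
apply: EP => y Ky /=; rewrite /psi; apply: Ek; exact: clampD.
Qed.

Lemma id_cont (f : fc) : (nbhs f) --> (f : Xspace θ n).
Proof.
have := @cvg_id _ (nbhs f).
move/fam_cvgP => /(_ (delay_int θ)); apply.
exact: segment_compact.
Qed.

Lemma saturate (O : set (Xspace θ n)) (g h : Xspace θ n) :
  open O -> O h -> (forall s, D s -> g s = h s) -> O g.
Proof.
move=> oO Oh gh.
have : nbhs h O by rewrite nbhsE /=; exists O.
move/uniform_nbhs => [E [entE EO]]; apply: EO => y Dy.
rewrite gh //; exact: entourage_refl.
Qed.

Lemma compact_closure_uD (A : set (R -> 'rV[R]_n)) (M : R) :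
  (forall g s, A g -> D s -> `|g s| <= M) ->
  (forall e, 0 < e -> exists2 d, 0 < d & forall g a b, A g -> D a -> D b ->
     `|a - b| < d -> `|g a - g b| < e) ->
  @compact (Xspace θ n) (@closure (Xspace θ n) A).
Proof.
move=> Abd Aue.
pose W : set fc := [set psi g | g in A].
have eqW : equicontinuous W id.
  move=> x E; rewrite -entourage_from_ballE => -[e /= e0 eE].
  have [d d0 Hd] := Aue e e0.
  exists d => //= y xy f [g Ag <-]; apply: eE => /=.
  rewrite -ball_normE /= /psi; apply: (Hd g) => //; try exact: clampD.
  apply: le_lt_trans (clamp_lip _ _) _; exact: xy.
have ppW : pointwise_precompact W id.
  move=> x; apply: (@precompact_subset _ _ (closed_ball_ Num.norm (0 : 'rV[R]_n) M)).
    move=> v [f [g Ag <-] <-] /=; rewrite /closed_ball_ /= sub0r normrN; apply: (Abd g) => //; exact: clampD.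
  apply: compact_precompact; first exact: norm_hausdorff.
  apply: bounded_closed_compact; last exact: closed_closed_ball_.
  exists M; split; first by rewrite num_real.
  move=> r Mr v; rewrite /closed_ball_ /= sub0r normrN => vM; lra.
have pcW : precompact W.
  by have := (@Ascoli R _ (@norm_hausdorff _ _) W (@locally_compactR R)).1 (conj ppW eqW) => -[].
have cC : compact (closure (W : set fc)) by rewrite -precompactE.
have cC' : @compact (Xspace θ n) (closure (W : set fc)).
  have := @continuous_compact fc (Xspace θ n) id (closure (W : set fc)).
  rewrite image_id; apply => //.
  by apply: continuous_subspaceT => f; exact: id_cont.
pose K := [set g : Xspace θ n | exists2 h, closure (W : set fc) h & forall s, D s -> g s = h s].
have cK : @compact (Xspace θ n) K.
  move=> F PF FK.
  pose pr (B : set (Xspace θ n)) : set (Xspace θ n) :=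
    [set h | closure (W : set fc) h /\ exists2 g, B g & forall s, D s -> g s = h s].
  pose G := filter_from F pr.
  have FG : ProperFilter G.
    apply: filter_from_proper.
      apply: filter_from_filter; first by exists setT; exact: filterT.
      move=> B1 B2 FB1 FB2; exists (B1 `&` B2); first exact: filterI.
      by move=> h [Ch [g [B1g B2g] gh]]; split; split => //; exists g.
    move=> B FB; have [g [Bg [h Ch gh]]] := filter_ex (filterI FB FK).
    by exists h; split => //; exists g.
  have GC : G (closure (W : set fc)) by exists setT; [exact: filterT| move=> h []].
  have [c [Cc clc]] := cC' G FG GC.
  exists c; split; first by exists c.
  move=> B N FB /uniform_nbhs [E [entE EN]].
  have [h [[_ [g Bg gh]] Eh]] := clc (pr B) _ (ex_intro2 _ _ B FB (fun x y => y))
    (proj2 (uniform_nbhs _ _) (ex_intro _ E (conj entE (fun x y => y)))).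
  exists g; split => //; apply: EN => y Dy; rewrite gh //; exact: Eh.
apply: (@subclosed_compact (Xspace θ n) _ K (@closed_closure (Xspace θ n) _) cK).
move=> g clg; exists (psi g); last by move=> s Ds; rewrite /psi clamp_id.
move=> B nB.
have := @psi_cont g B nB => /clg [a [Aa Ba]].
by exists (psi a); split => //; exists a.
Qed.

End Topo.
Section SProps.
Context {R : realType} {n : nat} (θ : R) (θ0 : 0 < θ).
Let D := delay_int θ.

Lemma in_X_cont (ξ : R -> 'rV[R]_n) a e : in_X θ ξ -> D a -> 0 < e ->
  exists2 r, 0 < r & forall b, D b -> `|a - b| < r -> `|ξ a - ξ b| < e.
Proof.
move=> /subspace_continuousP /(_ a) + Da e0 => /(_ Da).
move/cvgrPdist_lt => /(_ e e0); rewrite near_withinE.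
case/nbhs_ballP => r r0 H; exists r => // b Db ab.
apply: H => //; rewrite -ball_normE /=; exact: ab.
Qed.

Lemma in_X_ue (ξ : R -> 'rV[R]_n) e : in_X θ ξ -> 0 < e ->
  exists2 d, 0 < d & forall a b, D a -> D b -> `|a - b| < d -> `|ξ a - ξ b| < e.
Proof.
move=> xX e0.
have cD : compact D by exact: segment_compact.
have := (near_covering_withinP D).2 ((compact_near_coveringP D).1 cD) R (0^'+)
  (fun d a => forall b, D b -> `|a - b| < d -> `|ξ a - ξ b| < e) _.
move=> H; have {H} : \forall d \near 0^'+, D `<=` (fun a => forall b, D b -> `|a - b| < d -> `|ξ a - ξ b| < e).
  apply: H.
  move=> x Dx.
  have e20 : 0 < e / 2 by rewrite divr_gt0.
  have [r r0 Hr] := @in_X_cont ξ x (e / 2) xX Dx e20.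
  have r20 : 0 < r / 2 by rewrite divr_gt0.
  near=> x' d => Dx' b Db x'b.
  have xx' : `|x - x'| < r / 2.
    near: x'; apply/nbhs_ballP; exists (r / 2) => // y; rewrite -ball_normE /=; done.
  have dr : d < r / 2 by near: d; exact: nbhs_right_lt.
  have xb : `|x - b| < r.
    apply: (le_lt_trans (ler_distD x' _ _)).
    by rewrite [r]splitr; apply: ltrD => //; apply: (lt_trans x'b).
  have rr : r / 2 < r by rewrite ltr_pdivrMr // ltr_pMr // ltr1n.
  have h1 := Hr x' Dx' (lt_trans xx' rr).
  have h2 := Hr b Db xb.
  apply: (le_lt_trans (ler_distD (ξ x) _ _)).
  by rewrite [e]splitr; apply: ltrD => //; rewrite distrC.
move=> nP; have [d [d0 Hd]] := filter_ex (filterI nP (nbhs_right_gt 0)).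
by exists d => // a b Da Db; apply: (d0 a Da).
Unshelve. all: by end_near.
Qed.

Lemma in_X_bd (ξ : R -> 'rV[R]_n) : in_X θ ξ ->
  exists r, forall a, D a -> `|ξ a| <= r.
Proof.
move=> xX.
have cD : compact D by exact: segment_compact.
have := (near_covering_withinP D).2 ((compact_near_coveringP D).1 cD) R (+oo)
  (fun r a => `|ξ a| <= r) _.
move=> H; have {H} : \forall r \near +oo, D `<=` (fun a => `|ξ a| <= r).
  apply: H.
  move=> x Dx.
  have [r r0 Hr] := @in_X_cont ξ x 1 xX Dx ltr01.
  near=> x' k => Dx'.
  have xx' : `|x - x'| < r.
    near: x'; apply/nbhs_ballP; exists r => // y; rewrite -ball_normE /=; done.
  have h1 := Hr x' Dx' xx'.
  have hk : `|ξ x| + 1 <= k by near: k; apply: nbhs_pinfty_ge; rewrite num_real.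
  apply: le_trans hk.
  have := ler_distD (ξ x) 0 (ξ x'); rewrite !sub0r !normrN; lra.
move=> nP; have [r Hr] := filter_ex nP.
by exists r.
Unshelve. all: by end_near.
Qed.

Lemma near_unif (ξ : Xspace θ n) e : 0 < e ->
  \forall ξ' \near ξ, forall a, D a -> `|ξ a - ξ' a| < e.
Proof.
move=> e0; apply/uniform_nbhs; exists [set xy | ball xy.1 e xy.2]; split.
  by rewrite -entourage_from_ballE; exists e.
by move=> h Hh a Da; have := Hh a Da; rewrite -ball_normE.
Qed.

Lemma S_bd (S : set (R -> 'rV[R]_n)) : S `<=` in_X θ -> @compact (Xspace θ n) S ->
  exists r, forall ξ a, S ξ -> D a -> `|ξ a| <= r.
Proof.
move=> SX cS.
have := (@compact_near_coveringP (Xspace θ n) S).1 cS R (+oo) (fun r ξ => forall a, D a -> `|ξ a| <= r) _.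
move=> H; have {H} : \forall r \near +oo, S `<=` (fun ξ => forall a, D a -> `|ξ a| <= r).
  apply: H.
  move=> ξ Sξ.
  have [r Hr] := @in_X_bd ξ (SX _ Sξ).
  near=> ξ' k.
  have h1 : forall c, D c -> `|ξ c - ξ' c| < 1 by near: ξ'; exact: near_unif.
  have hk : r + 1 <= k by near: k; apply: nbhs_pinfty_ge; rewrite num_real.
  move=> a Da; have h1a := h1 a Da.
  apply: le_trans hk.
  have := ler_distD (ξ a) 0 (ξ' a); rewrite !sub0r !normrN.
  have := Hr a Da; lra.
move=> nP; have [r Hr] := filter_ex nP.
by exists r => ξ a Sξ; apply: Hr.
Unshelve. all: by end_near.
Qed.

Lemma S_ue (S : set (R -> 'rV[R]_n)) e : S `<=` in_X θ -> @compact (Xspace θ n) S -> 0 < e ->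
  exists2 d, 0 < d & forall ξ a b, S ξ -> D a -> D b -> `|a - b| < d -> `|ξ a - ξ b| < e.
Proof.
move=> SX cS e0.
have := (@compact_near_coveringP (Xspace θ n) S).1 cS R (0^'+)
  (fun d ξ => forall a b, D a -> D b -> `|a - b| < d -> `|ξ a - ξ b| < e) _.
move=> H; have {H} : \forall d \near 0^'+, S `<=`
    (fun ξ => forall a b, D a -> D b -> `|a - b| < d -> `|ξ a - ξ b| < e).
  apply: H.
  move=> ξ Sξ.
  have e30 : 0 < e / 3 by rewrite divr_gt0.
  have [d0 d00 Hd0] := @in_X_ue ξ (e / 3) (SX _ Sξ) e30.
  near=> ξ' d => a b Da Db ab.
  have h1 : forall c, D c -> `|ξ c - ξ' c| < e / 3 by near: ξ'; exact: near_unif.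
  have hd : d < d0 by near: d; exact: nbhs_right_lt.
  have h2 := Hd0 a b Da Db (lt_trans ab hd).
  have h3 := h1 a Da; have h4 := h1 b Db.
  have t1 := ler_distD (ξ a) (ξ' a) (ξ' b); have t2 := ler_distD (ξ b) (ξ a) (ξ' b).
  rewrite (distrC (ξ' a) (ξ a)) in t1.
  lra.
move=> nP; have [d [d0 Hd]] := filter_ex (filterI nP (nbhs_right_gt 0)).
by exists d => // ξ a b Sξ; apply: (d0 ξ Sξ).
Unshelve. all: by end_near.
Qed.

End SProps.
Section IntBound.
Context {R : realType}.
Local Notation mu := (@lebesgue_measure R).

Lemma int_bound (h : R -> R) q p Kf : q <= p -> 0 <= Kf ->
  mu.-integrable `]q, p] (EFin \o h) ->
  (forall s, `]q, p]%classic s -> `|h s| <= Kf) ->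
  `|\int[mu]_(s in `]q, p]) h s| <= Kf * (p - q).
Proof.
move=> qp K0 ih H.
have mD : measurable (`]q, p]%classic : set R) by exact: measurable_itv.
apply: (le_trans (le_normr_Rintegral _ _)) => //.
have muD : mu (`]q, p]%classic : set R) = (p - q)%:E.
  rewrite lebesgue_measure_itv /=; case: ifPn => h0.
    by rewrite -EFinD.
  move: h0; rewrite /= ?bnd_simp -?leNgt lee_fin => pq.
  have -> : p = q by apply/eqP; rewrite eq_le pq qp.
  by rewrite subrr.
have icst : mu.-integrable `]q, p] (EFin \o cst Kf).
  apply/integrableP; split; first exact/measurable_EFinP/measurable_cst.
  rewrite (eq_integral (cst Kf%:E)); last by move=> s _ /=; rewrite ger0_norm.
  by rewrite integral_cst //= muD -EFinM ltry.
apply: (le_trans (le_Rintegral _ _ _ _)); [exact: mD | exact: integrable_norm | exact: icst | exact: H | ].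
rewrite Rintegral_cst //.
have -> : fine (mu `]q, p]%classic) = p - q by rewrite muD.
by [].
Qed.

End IntBound.
Section Vec.
Context {R : realType} {n : nat}.

Lemma rv_norm_le (v : 'rV[R]_n) c : 0 <= c -> (forall i, `|v ord0 i| <= c) -> `|v| <= c.
Proof.
move=> c0 H; rewrite /Num.Def.normr /= mx_normrE (bigmax_le _ c0) //= => -[i j] _.
by rewrite (ord1 i); apply: H.
Qed.

Lemma rv_norm_lt (v : 'rV[R]_n) c : 0 < c -> (forall i, `|v ord0 i| < c) -> `|v| < c.
Proof.
move=> c0 H; rewrite /Num.Def.normr /= mx_normrE (bigmax_lt _ c0) //= => -[i j] _.
by rewrite (ord1 i); apply: H.
Qed.

Lemma rv_coord_le (v : 'rV[R]_n) i : `|v ord0 i| <= `|v|.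
Proof.
rewrite [X in _ <= X]/Num.Def.normr /= mx_normrE; apply/bigmax_geP; right.
by exists (ord0, i).
Qed.

End Vec.

Section Sol.
Context {R : realType} {n m : nat} (θ : R) (θ0 : 0 < θ)
  (f : (R -> 'rV[R]_n) -> 'rV[R]_m -> 'rV[R]_n)
  (ξ : R -> 'rV[R]_n) (u : R -> 'rV[R]_m) (x : R -> 'rV[R]_n)
  (hξ : in_X θ ξ) (hsol : is_solution θ f ξ u x).

Let g i := fun s => f (hist_at x s) (u s) ord0 i.

Lemma sol_int t i : 0 <= t -> x t ord0 i = ξ 0 ord0 i + parameterized_integral lebesgue_measure 0 t (g i).
Proof. by move=> t0; rewrite (proj2 ((proj2 hsol) t t0 i)). Qed.

Lemma sol_cont_pos c e : 0 <= c -> 0 < e ->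
  exists2 r, 0 < r & forall c', 0 <= c' -> `|c - c'| < r -> `|x c - x c'| < e.
Proof.
move=> c0 e0.
have b0 : 0 <= c + 1 by lra.
have H : forall i, \forall t \near c, `[0, c + 1]%classic t -> `|x c ord0 i - x t ord0 i| < e.
  move=> i.
  have [intg _] := (proj2 hsol) (c + 1) b0 i.
  have := @parameterized_integral_continuous R 0 (c + 1) (g i) b0 intg.
  move/subspace_continuousP => /(_ c).
  have cin : `[0, c + 1]%classic c by rewrite /= in_itv /=; apply/andP; split; lra.
  move=> /(_ cin) /cvgrPdist_lt /(_ e e0); rewrite near_withinE.
  apply: filterS => t Ht tin.
  have t0 : 0 <= t by move: tin; rewrite /= in_itv /= => /andP[].
  rewrite (sol_int _ i c0) (sol_int _ i t0).
  have -> : forall a b c : R, a + b - (a + c) = b - c by move=> *; ring.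
  exact: Ht.
have [r r0 Hr] := (nbhs_ballP _ _).1 (filter_forall _ H).
exists (Num.min r 1); first by rewrite lt_min r0 ltr01.
move=> c' c'0; rewrite lt_min => /andP[cr c1].
apply: rv_norm_lt => // i; rewrite !mxE; apply: (Hr c').
  by rewrite -ball_normE /=.
rewrite /= in_itv /=; apply/andP; split => //.
move: c1; rewrite distrC; case: (leP 0 (c' - c)) => h; [rewrite ger0_norm // | rewrite ltr0_norm //]; lra.
Qed.

Definition lo (q : R) := if q <= 0 then q else 0.
Definition hi (q : R) := if q <= 0 then 0 else q.

Lemma lo_lip p q : `|lo p - lo q| <= `|p - q|.
Proof.
rewrite /lo ler_norml; case: (leP p 0) => hp; case: (leP q 0) => hq;
case: (leP 0 (p - q)) => h; rewrite ?(ger0_norm h) ?(ltr0_norm h); apply/andP; split; lra.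
Qed.

Lemma hi_lip p q : `|hi p - hi q| <= `|p - q|.
Proof.
rewrite /hi ler_norml; case: (leP p 0) => hp; case: (leP q 0) => hq;
case: (leP 0 (p - q)) => h; rewrite ?(ger0_norm h) ?(ltr0_norm h); apply/andP; split; lra.
Qed.

Lemma loD q : - θ <= q -> delay_int θ (lo q).
Proof.
have := θ0 => t0.
rewrite /lo /delay_int /= in_itv /=; case: (leP q 0) => h hq; apply/andP; split; lra.
Qed.

Lemma hi_ge0 q : 0 <= hi q.
Proof. by rewrite /hi; case: (leP q 0) => h //; exact: ltW. Qed.

Lemma x_decomp q : - θ <= q -> x q = ξ (lo q) + x (hi q) - ξ 0.
Proof.
have := θ0 => t0.
move=> hq; have x0 : x 0 = ξ 0.
  by apply: (proj1 hsol); rewrite /delay_int /= in_itv /=; apply/andP; split; lra.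
rewrite /lo /hi; case: (leP q 0) => h.
  rewrite x0 -addrA subrr addr0; apply: (proj1 hsol).
  by rewrite /delay_int /= in_itv /=; apply/andP; split.
by rewrite addrAC subrr add0r.
Qed.

Lemma sol_cont_all p e : - θ <= p -> 0 < e ->
  exists2 r, 0 < r & forall q, - θ <= q -> `|p - q| < r -> `|x p - x q| < e.
Proof.
move=> hp e0.
have e20 : 0 < e / 2 by rewrite divr_gt0.
have [r1 r10 H1] := @in_X_cont _ _ θ ξ (lo p) (e / 2) hξ (@loD p hp) e20.
have [r2 r20 H2] := @sol_cont_pos (hi p) (e / 2) (hi_ge0 p) e20.
exists (Num.min r1 r2); first by rewrite lt_min r10 r20.
move=> q hq; rewrite lt_min => /andP[pr1 pr2].
rewrite (@x_decomp p hp) (@x_decomp q hq).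
have -> : ξ (lo p) + x (hi p) - ξ 0 - (ξ (lo q) + x (hi q) - ξ 0) =
  (ξ (lo p) - ξ (lo q)) + (x (hi p) - x (hi q)) by rewrite opprB addrA subrK opprD addrACA.
apply: (le_lt_trans (ler_normD _ _)); rewrite [e]splitr; apply: ltrD.
  by apply: H1; [exact: loD| exact: le_lt_trans (lo_lip _ _) pr1].
by apply: H2; [exact: hi_ge0| exact: le_lt_trans (hi_lip _ _) pr2].
Qed.

Lemma hist_inX s : 0 <= s -> in_X θ (hist_at x s).
Proof.
move=> s0; apply/subspace_continuousP => a Da.
apply/cvgrPdist_lt => e e0; rewrite near_withinE.
have hsa : - θ <= s + a.
  by move: Da; rewrite /delay_int /= in_itv /= => /andP[h1 h2]; lra.
have [r r0 Hr] := @sol_cont_all (s + a) e hsa e0.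
apply/nbhs_ballP; exists r => // b; rewrite -ball_normE /= => ab Db.
rewrite /from_subspace /hist_at; apply: Hr.
  by move: Db; rewrite /delay_int /= in_itv /= => /andP[h1 h2]; lra.
by have -> : s + a - (s + b) = a - b by ring.
Qed.

Lemma sol_lip T Kf : 0 <= Kf ->
  (forall s, 0 <= s -> s <= T -> `|f (hist_at x s) (u s)| <= Kf) ->
  forall p q, 0 <= q -> q <= p -> p <= T -> `|x p - x q| <= Kf * (p - q).
Proof.
move=> K0 HK p q q0 qp pT.
have p0 : 0 <= p by exact: le_trans qp.
apply: rv_norm_le; first by rewrite mulr_ge0 // subr_ge0.
move=> i; rewrite !mxE (sol_int _ i p0) (sol_int _ i q0).
have -> : forall a b c : R, a + b - (a + c) = b - c by move=> *; ring.
have [intg _] := (proj2 hsol) p p0 i.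
rewrite /parameterized_integral.
rewrite (@Rintegral_itvB R (g i) (BLeft 0) (BRight p) q intg); last 2 first.
  by rewrite bnd_simp.
  by rewrite bnd_simp.
apply: int_bound => //.
  apply: integrableS intg => //.
  by apply: subset_itvr; rewrite bnd_simp.
move=> s; rewrite /= in_itv /= => /andP[qs sp].
apply: le_trans (rv_coord_le _ i) _.
by apply: HK => //; [lra | exact: le_trans pT].
Qed.

End Sol.
Lemma sol_lip_abs {R : realType} {n m : nat} (θ : R) f ξ u (x : R -> 'rV[R]_n) T Kf :
  @is_solution R n m θ f ξ u x -> 0 <= Kf ->
  (forall s, 0 <= s -> s <= T -> `|f (hist_at x s) (u s)| <= Kf) ->
  forall p q, 0 <= p -> p <= T -> 0 <= q -> q <= T -> `|x p - x q| <= Kf * `|p - q|.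
Proof.
move=> hsol K0 HK p q p0 pT q0 qT.
case: (leP q p) => h.
  have h' : 0 <= p - q by rewrite subr_ge0.
  by rewrite (ger0_norm h'); exact: (@sol_lip _ _ _ θ f ξ u x hsol T Kf K0 HK p q q0 h pT).
have h' : 0 <= q - p by rewrite subr_ge0 ltW.
rewrite distrC (distrC p) (ger0_norm h').
exact: (@sol_lip _ _ _ θ f ξ u x hsol T Kf K0 HK q p p0 (ltW h) qT).
Qed.

Theorem lemma2p3 (R : realType) (n m : nat) (θ : R)
    (f : (R -> 'rV[R]_n) -> 'rV[R]_m -> 'rV[R]_n) :
  0 < θ ->
  f_local θ f -> f_locally_lipschitz θ f -> f_bounded_on_bounded θ f ->
  robustly_forward_complete θ f ->
  forall (S : set (R -> 'rV[R]_n)) (U : set 'rV[R]_m) (T : R),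
    S `<=` in_X θ ->
    @compact (Xspace θ n) S ->
    bounded_set U ->
    0 < T ->
    @compact (Xspace θ n) (@closure (Xspace θ n) (reach_set θ f S U T)).
Proof.
move=> θ0 _ _ fbd [_ rfc] S U T SX cS bU T0.
have [rS HrS] := @S_bd R n θ S SX cS.
have [MU HMU] : exists MU, forall v, U v -> `|v| <= MU.
  have bU' : \forall M \near +oo, forall v, U v -> `|v| <= M := bU.
  by have [M HM] := filter_ex bU'; exists M.
pose r := `|rS| + `|MU| + 1.
have r0 : 0 < r by rewrite /r; have := normr_ge0 rS; have := normr_ge0 MU; lra.
have [K HK] := rfc T r T0 r0.
have [Kf HKf] := fbd (`|K| + r).
pose L := `|Kf|.
have L0 : 0 <= L by exact: normr_ge0.
have key : forall ξ u x, input_MU U u -> S ξ -> is_solution θ f ξ u x ->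
    [/\ in_X θ ξ, (forall a, delay_int θ a -> x a = ξ a) &
     forall p q, 0 <= p -> p <= T -> 0 <= q -> q <= T -> `|x p - x q| <= L * `|p - q|].
  move=> ξ u x [uM uU] Sξ hsol.
  have hξ := SX ξ Sξ.
  split => //; first by move=> a Da; exact: (proj1 hsol).
  have ub : forall s, 0 <= s -> `|u s| <= r.
    move=> s s0; have := HMU _ (uU s s0); have := ler_norm MU; have := normr_ge0 rS.
    rewrite /r; lra.
  have D0 : delay_int θ 0 by rewrite /delay_int /= in_itv /= lexx andbT oppr_le0 ltW.
  have Xξ : Xnorm θ ξ <= r.
    apply: ge_sup; first by exists `|ξ 0|; exists 0.
    move=> y [s Ds <-]; have := HrS ξ s Sξ Ds; have := ler_norm rS; have := normr_ge0 MU.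
    rewrite /r; lra.
  have ess : ess_bounded_by u r.
    apply: aeW => t; rewrite /= in_itv /= andbT => t0; exact: ub.
  have Kbd : forall s, 0 <= s -> s <= T -> `|f (hist_at x s) (u s)| <= L.
    move=> s s0 sT; apply: le_trans (ler_norm Kf).
    apply: HKf.
    - exact: (@hist_inX R n m θ θ0 f ξ u x hξ hsol s s0).
    - have := HK ξ u x s hξ Xξ uM ess hsol; rewrite s0 sT => /(_ erefl).
      have := ler_norm K; lra.
    - have := ub s s0; have := normr_ge0 K; lra.
  exact: (@sol_lip_abs R n m θ f ξ u x T L hsol L0 Kbd).
have DT : forall t s, 0 <= t <= T -> delay_int θ s -> - θ <= t + s /\ t + s <= T.
  move=> t s /andP[t0 tT]; rewrite /delay_int /= in_itv /= => /andP[s1 s2]; split; lra.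
apply: (@compact_closure_uD R n θ θ0 _ (`|rS| + L * T)).
  move=> g s [t [ξ [u [x [tT uMU Sξ hsol ->]]]]] Ds.
  have [hξ xD Lip] := key ξ u x uMU Sξ hsol.
  have [p1 p2] := DT t s tT Ds.
  rewrite /hist_at; have := ler_norm rS => hr.
  case: (leP (t + s) 0) => hp.
    rewrite xD; last by rewrite /delay_int /= in_itv /= p1 hp.
    have := HrS ξ (t + s) Sξ; rewrite /delay_int /= in_itv /= p1 hp => /(_ erefl).
    have : 0 <= L * T by rewrite mulr_ge0 // ltW.
    move=> hLT h; apply: (le_trans h); apply: (le_trans hr); by rewrite lerDl.
  have D0 : delay_int θ 0 by rewrite /delay_int /= in_itv /= lexx andbT oppr_le0 ltW.
  have h1 := Lip (t + s) 0 (ltW hp) p2 (lexx 0) (ltW T0).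
  have h2 := HrS ξ 0 Sξ D0.
  have h3 := ler_distD (x 0) 0 (x (t + s)).
  rewrite !sub0r !normrN (xD 0 D0) in h3.
  rewrite (xD 0 D0) in h1.
  have h4 : L * `|t + s - 0| <= L * T.
    by apply: ler_wpM2l => //; rewrite subr0 ger0_norm // ltW.
  rewrite (distrC (x (t + s))) in h1.
  lra.
move=> e e0.
have e20 : 0 < e / 2 by rewrite divr_gt0.
have [d1 d10 Hd1] := @S_ue R n θ S (e / 2) SX cS e20.
have L10 : 0 < L + 1 by lra.
pose d2 := e / 2 / (L + 1).
have d20 : 0 < d2 by rewrite /d2 divr_gt0.
exists (Num.min d1 d2); first by rewrite lt_min d10 d20.
move=> g a b [t [ξ [u [x [tT uMU Sξ hsol ->]]]]] Da Db.
rewrite lt_min => /andP[ab1 ab2].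
have [hξ xD Lip] := key ξ u x uMU Sξ hsol.
have [pa1 pa2] := DT t a tT Da.
have [pb1 pb2] := DT t b tT Db.
have eab : `|(t + a) - (t + b)| = `|a - b| by congr (`|_|); ring.
rewrite /hist_at (@x_decomp R n m θ θ0 f ξ u x hsol _ pa1) (@x_decomp R n m θ θ0 f ξ u x hsol _ pb1).
have -> : ξ (lo (t + a)) + x (hi (t + a)) - ξ 0 - (ξ (lo (t + b)) + x (hi (t + b)) - ξ 0) =
  (ξ (lo (t + a)) - ξ (lo (t + b))) + (x (hi (t + a)) - x (hi (t + b))).
  by rewrite opprB addrA subrK opprD addrACA.
apply: (le_lt_trans (ler_normD _ _)); rewrite [e]splitr; apply: ltrD.
  apply: Hd1 => //; try exact: loD.
  by apply: le_lt_trans (lo_lip _ _) _; rewrite eab.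
have hiT : forall q, q <= T -> hi q <= T.
  by move=> q qT; rewrite /hi; case: (leP q 0) => // _; exact: ltW.
apply: (le_lt_trans (Lip _ _ (hi_ge0 _) (hiT _ pa2) (hi_ge0 _) (hiT _ pb2))).
have h1 : L * `|hi (t + a) - hi (t + b)| <= L * d2.
  apply: ler_wpM2l => //; apply: ltW; apply: le_lt_trans (hi_lip _ _) _.
  by rewrite eab.
apply: le_lt_trans h1 _.
rewrite /d2 mulrA ltr_pdivrMr //.
nra.
Qed.
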